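(* Let $\Xi:\mathbf R^n\to\mathbf R^n$ be continuously differentiable with symmetric Jacobian $D\Xi(x)$ for every $x\in\mathbf R^n$, and let $\alpha\in(0,1)$. Then $\Xi$ is $\alpha$-averaged if and only if $\operatorname{spec}(D\Xi(x))\subset[1-2\alpha,1]$ for all $x\in\mathbf R^n$.
   Context: $\mathbf R^n$ carries the Euclidean norm $\|\cdot\|$. An operator $T$ is non-expansive if $\|T(x)-T(y)\|\le\|x-y\|$ for all $x,y$. For $\alpha\in(0,1)$, an operator $\Xi:\mathbf R^n\to\mathbf R^n$ is called $\alpha$-averaged if there exists a non-expansive $T:\mathbf R^n\to\mathbf R^n$ such that $\Xi=(1-\alpha)\mathrm{id}+\alpha T$. $\operatorname{spec}(M)$ denotes the set of eigenvalues of a matrix $M$. *)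

(* Defs.v *)
From HB Require Import structures.
From mathcomp Require Import all_boot all_order all_algebra.
From mathcomp Require Import all_classical all_reals all_analysis.
Set Implicit Arguments. Unset Strict Implicit. Unset Printing Implicit Defensive.
Import Order.TTheory GRing.Theory Num.Theory.
Import numFieldNormedType.Exports.
Local Open Scope ring_scope.

(* Euclidean norm on R^n (the library's default norm on 'rV is the max norm). *)
Definition eucl_norm (R : realType) (n : nat) (v : 'rV[R]_n) : R :=
  Num.sqrt (\sum_(i < n) v ord0 i ^+ 2).

Definition nonexpansive (R : realType) (n : nat) (T : 'rV[R]_n -> 'rV[R]_n) : Prop :=
  forall x y, eucl_norm (T x - T y) <= eucl_norm (x - y).

Definition averaged (R : realType) (n : nat) (alpha : R)
  (Xi : 'rV[R]_n -> 'rV[R]_n) : Prop :=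
  exists T : 'rV[R]_n -> 'rV[R]_n,
    nonexpansive T /\ forall x, Xi x = (1 - alpha) *: x + alpha *: T x.

Definition C1 (R : realType) (n : nat) (Xi : 'rV[R]_n -> 'rV[R]_n) : Prop :=
  (forall x, differentiable Xi x) /\ continuous (fun x => jacobian Xi x).

(* Main.v *)
Require Import Defs.
From HB Require Import structures.
From mathcomp Require Import all_boot all_order all_algebra.
From mathcomp Require Import all_classical all_reals all_analysis.
From mathcomp.real_closed Require Import complex.
From mathcomp Require Import ring lra.
Import Order.TTheory GRing.Theory Num.Theory.
Import numFieldNormedType.Exports.
Local Open Scope ring_scope.
Set Implicit Arguments. Unset Strict Implicit. Unset Printing Implicit Defensive.
Section Spec.
Variable R : realType.
Local Open Scope sesquilinear_scope.

Definition nsq {n : nat} (v : 'rV[R]_n) := \sum_(i < n) v ord0 i ^+ 2.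

Lemma spec_bound n (M : 'M[R]_n) : M^T = M ->
  (forall b, eigenvalue M b -> -1 <= b <= 1) ->
  forall v : 'rV[R]_n, nsq (v *m M) <= nsq v.
Proof.
move=> Msym Mev v.
pose f := real_complex R.
pose B := map_mx f M.
have Bsym : B \is symmetricmx.
  apply/is_hermitianmxP; rewrite expr0 scale1r map_mx_id //.
  by rewrite /B map_trmx Msym.
have Breal : B \is a realmx.
  by apply/mxOverP => i j; rewrite mxE; apply/complex_realP; eexists.
have Bherm := realsym_hermsym Bsym Breal.
set P := spectralmx B; set d := spectral_diag B.
have PU : P \is unitarymx := spectral_unitarymx B.
have PPt : P *m P^t* = 1%:M by apply/unitarymxP.
have PtP : P^t* *m P = 1%:M by apply: mulmx1C.
have Bdec : B = P^t* *m diag_mx d *m P.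
  rewrite -invmx_unitary //; apply/orthomx_spectralP/hermitian_normalmx.
  exact: Bherm.
have dreal : d \is a realmx := hermitian_spectral_diag_real Bherm.
have dbound : forall i, d 0 i * (d 0 i)^* <= 1.
  move=> i; have /complex_realP [r dr] : d 0 i \is Num.real := mxOverP dreal 0 i.
  have ev : eigenvalue M r.
    rewrite eigenvalue_root_char -(fmorph_root f) map_char_poly.
    rewrite -eigenvalue_root_char.
    apply/eigenvalueP; exists (row i P).
      rewrite -/B Bdec !mulmxA -!row_mul PPt mul1mx.
      by rewrite row_mul row_diag_mx -scalemxAl -rowE dr.
    apply/eqP => H.
    have := congr1 (fun X => X *m P^t*) H.
    rewrite /= -row_mul PPt mul0mx => /rowP /(_ i).
    by rewrite !mxE eqxx /= => /eqP; rewrite oner_eq0.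
  have /andP[r1 r2] := Mev r ev.
  rewrite dr conj_Creal; last by apply/complex_realP; exists r.
  rewrite -rmorphM -(rmorph1 f) lecR.
  nra.
pose q (x : 'rV[R[i]]_n) := (x *m x^t*) 0 0.
have qE : forall x, q x = \sum_j x 0 j * (x 0 j)^*.
  by move=> x; rewrite /q mxE; apply: eq_bigr => j _; rewrite !mxE.
have qf : forall w : 'rV[R]_n, q (map_mx f w) = f (nsq w).
  move=> w; rewrite qE /nsq /f rmorph_sum; apply: eq_bigr => j _.
  rewrite !mxE conj_Creal; last by apply/complex_realP; eexists.
  by rewrite rmorphXn expr2 -/f.
have qU : forall x, q (x *m P) = q x.
  move=> x; rewrite /q trmx_mul map_mxM !mulmxA -(mulmxA x) PPt mulmx1.
  by [].
have qD : forall x, q (x *m diag_mx d) <= q x.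
  move=> x; rewrite !qE; apply: ler_sum => j _.
  rewrite mul_mx_diag !mxE rmorphM.
  set a := x 0 j; set b := d 0 j.
  rewrite [X in X <= _](_ : _ = (b * b^*) * (a * a^*)); last by ring.
  by apply: ler_piMl; [apply: mul_conjC_ge0 | apply: dbound].
pose u := map_mx f v; pose x := u *m P^t*.
have ux : u = x *m P by rewrite /x -mulmxA PtP mulmx1.
have uB : map_mx f (v *m M) = x *m diag_mx d *m P.
  by rewrite map_mxM -/u -/B Bdec !mulmxA.
rewrite -lecR -/f -!qf uB qU -/u ux qU.
exact: qD.
Qed.
End Spec.
Arguments nsq {R n}.
Section Ana.
Variable R : realType.
Local Open Scope classical_set_scope.
Local Open Scope ring_scope.

Lemma nsq_ge0 n (v : 'rV[R]_n) : 0 <= nsq v.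
Proof. by apply: sumr_ge0 => i _; apply: sqr_ge0. Qed.

Lemma eucl_leE n (u v : 'rV[R]_n) : (eucl_norm u <= eucl_norm v) = (nsq u <= nsq v).
Proof. by rewrite /eucl_norm ler_sqrt // nsq_ge0. Qed.

Lemma nsqZ n k (v : 'rV[R]_n) : nsq (k *: v) = k ^+ 2 * nsq v.
Proof.
by rewrite /nsq mulr_sumr; apply: eq_bigr => i _; rewrite mxE exprMn.
Qed.

Lemma nsq_gt0 n (v : 'rV[R]_n) : v != 0 -> 0 < nsq v.
Proof.
move=> vn0; have [i vi] : exists i, v 0 i != 0.
  apply/existsP; apply: contraR vn0 => /existsPn H; apply/eqP/rowP => j.
  by rewrite mxE; apply/eqP; have := H j; rewrite negbK.
have h1 : 0 < v 0 i ^+ 2 by rewrite lt_def sqrf_eq0 vi sqr_ge0.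
have h2 : 0 <= \sum_(j | j != i) v 0 j ^+ 2.
  by apply: sumr_ge0 => j _; apply: sqr_ge0.
rewrite /nsq (bigD1 i) //=; lra.
Qed.

Lemma nsq_continuous n : continuous (@nsq R n).
Proof.
have -> : @nsq R n = \sum_(i < n) (fun v : 'rV[R]_n => v 0 i * v 0 i).
  by apply/funext => v; rewrite fct_sumE /nsq; apply: eq_bigr => i _; rewrite expr2.
elim/big_ind: _ => //.
- exact: cst_continuous.
- by move=> f g cf cg x; apply: continuousD; [exact: cf | exact: cg].
- by move=> i _ x; apply: continuousM; apply: (@coord_continuous R 1 n 0 i).
Qed.

End Ana.
Section Ana2.
Variable R : realType.
Local Open Scope classical_set_scope.
Local Open Scope ring_scope.
Lemma deriv_bound n (T : 'rV[R]_n -> 'rV[R]_n) z v :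
  nonexpansive T -> derivable T z v -> nsq ('D_v T z) <= nsq v.
Proof.
move=> NE dT.
have Hc := continuous_cvg _ (@nsq_continuous R n _) dT.
apply: (cvgr_to_le (Hc _)).
near=> h.
have hne : h != 0 by near: h; exact: nbhs_dnbhs_neq.
rewrite /= nsqZ.
have := NE (h *: v + z) z; rewrite eucl_leE addrK nsqZ => H.
have hp : 0 < h ^+ 2 by rewrite lt_def sqrf_eq0 hne sqr_ge0.
by rewrite exprVn ler_pdivrMl.
Unshelve. all: by end_near.
Qed.
End Ana2.
Section Ana3.
Variable R : realType.
Local Open Scope classical_set_scope.
Local Open Scope ring_scope.

Lemma derive_line n (T : 'rV[R]_n -> 'rV[R]_n) (y d : 'rV[R]_n) (t : R) :
  (derivable (fun s : R => T (s *: d + y)) t 1 <-> derivable T (t *: d + y) d) /\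
  'D_1 (fun s : R => T (s *: d + y)) t = 'D_d T (t *: d + y).
Proof.
have E : (fun h : R => h^-1 *: (((fun s : R => T (s *: d + y)) \o shift t) (h *: 1)
            - T (t *: d + y)))
       = (fun h : R => h^-1 *: ((T \o shift (t *: d + y)) (h *: d) - T (t *: d + y))).
  apply/funext => h /=; congr (_ *: (T _ - _)).
  by rewrite /= scalerDl -[h *: 1]/(h * 1) mulr1 addrA.
by rewrite /derivable /derive E.
Qed.

Lemma derive_coord n (phi : R -> 'rV[R]_n) t i : derivable phi t 1 ->
  is_derive t 1 (fun s => phi s 0 i) ('D_1 phi t 0 i).
Proof.
move=> dphi.
have @L : {linear 'rV[R]_n -> R}.
  by exists (fun N : 'rV[R]_n => N 0 i); do 2![eexists]; do ?[constructor];
     rewrite ?mxE// => ? *; rewrite ?mxE//; move=> ?; rewrite !mxE.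
have cL : continuous L by apply: coord_continuous.
have dfx : differentiable phi t by apply/derivable1_diffP.
have dL : differentiable L (phi t) by apply: linear_differentiable.
have dc : differentiable (L \o phi) t by apply: differentiable_comp.
rewrite (_ : (fun s => _) = L \o phi) //.
apply: DeriveDef; first by apply/derivable1_diffP.
have dlL := diff_lin (phi t) cL.
rewrite deriveE // diff_comp //= dlL -deriveE //.
Qed.

End Ana3.
Section Ana4.
Variable R : realType.
Local Open Scope classical_set_scope.
Local Open Scope ring_scope.

Lemma nsq_dot n (u w : 'rV[R]_n) : \sum_i w 0 i * u 0 i = nsq w -> nsq w <= nsq u.
Proof.
move=> H.
have h0 : 0 <= \sum_i (u 0 i - w 0 i) ^+ 2 by apply: sumr_ge0 => i _; apply: sqr_ge0.
have E : \sum_i (u 0 i - w 0 i) ^+ 2 = nsq u + nsq w - 2 * \sum_i w 0 i * u 0 i.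
  rewrite /nsq mulr_sumr -big_split /= -sumrB; apply: eq_bigr => i _; ring.
lra.
Qed.

Lemma nonexp_of_bound n (T : 'rV[R]_n -> 'rV[R]_n) (M : 'rV[R]_n -> 'M[R]_n) :
  (forall z, differentiable T z) -> (forall z v, 'D_v T z = v *m M z) ->
  (forall z v, nsq (v *m M z) <= nsq v) -> nonexpansive T.
Proof.
move=> dT DT bd x y.
set d := x - y; set w := T x - T y.
pose phi := fun s : R => T (s *: d + y).
have dphi : forall t, derivable phi t 1 /\ 'D_1 phi t = d *m M (t *: d + y).
  move=> t; have [e1 e2] := derive_line T y d t.
  split; first by apply/e1; apply: diff_derivable.
  by rewrite /phi e2 DT.
pose g := \sum_(i < n) (w 0 i *: (fun s => phi s 0 i)).
have gE : forall s, g s = \sum_i w 0 i * phi s 0 i.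
  by move=> s; rewrite /g fct_sumE.
have gd : forall t : R, is_derive t (1 : R) g (\sum_i w 0 i * (d *m M (t *: d + y)) 0 i).
  move=> t; have [dp Dp] := dphi t.
  rewrite /g; apply: is_derive_sum => i.
  rewrite -Dp; apply: is_deriveZ.
  exact: derive_coord.
have gc : {within `[0, 1], continuous g}.
  by apply: derivable_within_continuous => t _; exact: ex_derive.
have [c _ E] := MVT ltr01 (fun t _ => gd t) gc.
rewrite !gE subr0 mulr1 -sumrB in E.
have E2 : \sum_i w 0 i * (d *m M (c *: d + y)) 0 i = nsq w.
  rewrite -E /nsq; apply: eq_bigr => i _.
  rewrite -mulrBr /phi scale1r scale0r add0r /d subrK -[w 0 i]/(w 0 i).
  by rewrite /w mxE expr2 !mxE.
rewrite eucl_leE; apply: (le_trans (nsq_dot E2)); exact: bd.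
Qed.
End Ana4.
Section Ana5.
Variable R : realType.
Local Open Scope classical_set_scope.
Local Open Scope ring_scope.

Lemma affine_eq n (Xi : 'rV[R]_n -> 'rV[R]_n) (a b : R) :
  (fun x => a *: (Xi x - b *: x)) = a *: (Xi - b *: (@idfun 'rV[R]_n)).
Proof. by apply/funext => x. Qed.

Lemma derive_affine n (Xi : 'rV[R]_n -> 'rV[R]_n) (a b : R) z v :
  differentiable Xi z ->
  is_derive z v (fun x => a *: (Xi x - b *: x)) (a *: (v *m jacobian Xi z - b *: v)).
Proof.
move=> dX.
have h1 : is_derive z v Xi (v *m jacobian Xi z).
  by rewrite -deriveEjacobian //; apply: derivableP; exact: diff_derivable.
rewrite affine_eq; exact: is_deriveZ.
Qed.

Lemma diff_affine n (Xi : 'rV[R]_n -> 'rV[R]_n) (a b : R) z :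
  differentiable Xi z -> differentiable (fun x => a *: (Xi x - b *: x)) z.
Proof.
move=> dX; rewrite affine_eq; apply: differentiableZ; apply: differentiableB => //.

Qed.
End Ana5.
Theorem mainTheorem2 (R : realType) (n : nat) (Xi : 'rV[R]_n -> 'rV[R]_n)
  (alpha : R) :
  C1 Xi ->
  (forall x, (jacobian Xi x)^T = jacobian Xi x) ->
  0 < alpha < 1 ->
  averaged alpha Xi <->
  (forall x (a : R), eigenvalue (jacobian Xi x) a -> 1 - 2 * alpha <= a <= 1).
Proof.
move=> [dXi _] Jsym /andP[a0 a1]; have an0 : alpha != 0 by rewrite gt_eqF.
split.
- move=> [T [NE TE]] z a /eigenvalueP [v vJ vn0].
  have Teq : T = (fun x => alpha^-1 *: (Xi x - (1 - alpha) *: x)).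
    apply/funext => x; rewrite TE [_ + alpha *: _]addrC addrK scalerA mulVf // scale1r.
    by [].
  have dd := derive_affine alpha^-1 (1 - alpha) v (dXi z).
  rewrite -Teq in dd.
  have := deriv_bound NE (@ex_derive _ _ _ _ _ _ _ dd).
  rewrite (@derive_val _ _ _ _ _ _ _ dd) vJ -scalerBl scalerA nsqZ.
  set b := alpha^-1 * (a - (1 - alpha)) => hb.
  have nv := nsq_gt0 vn0.
  have hb2 : b ^+ 2 <= 1 by rewrite -(ler_pM2r nv) mul1r.
  have ha : alpha * b = a - (1 - alpha) by rewrite /b mulrA mulfV // mul1r.
  have hb3 : -1 <= b <= 1.
    apply/andP; split; nra.
  move/andP: hb3 => [hb4 hb5].
  apply/andP; split; nra.
- move=> H.
  pose M := fun z => alpha^-1 *: (jacobian Xi z - (1 - alpha)%:M).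
  exists (fun x => alpha^-1 *: (Xi x - (1 - alpha) *: x)); split; last first.
    by move=> x; rewrite scalerA mulfV // scale1r addrC subrK.
  apply: (@nonexp_of_bound _ _ _ M).
  + by move=> z; apply: diff_affine.
  + move=> z v; rewrite (@derive_val _ _ _ _ _ _ _ (derive_affine alpha^-1 (1 - alpha) v (dXi z))).
    by rewrite /M -scalemxAr mulmxBr mul_mx_scalar.
  + move=> z v; apply: spec_bound.
      by rewrite /M linearZ /= linearB /= tr_scalar_mx Jsym.
    move=> b /eigenvalueP [u uM un0].
    have JM : jacobian Xi z = alpha *: M z + (1 - alpha)%:M.
      by rewrite /M scalerA mulfV // scale1r subrK.
    have : eigenvalue (jacobian Xi z) (alpha * b + (1 - alpha)).
      apply/eigenvalueP; exists u => //.
      by rewrite JM mulmxDr -scalemxAr uM mul_mx_scalar scalerA -scalerDl.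
    move=> /H /andP [h1 h2]; apply/andP; split; nra.
Qed.
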